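(* Consider the online execution scheduling algorithm OES (described in the context) applied to a distributed GNN training job with a fixed task placement, and let $T_{OES}$ be the resulting training makespan (completion time of all tasks of iteration $N$). Let $T^*$ be the optimal makespan of the offline execution and flow scheduling problem (described in the context) for the same placement and the same data volumes. Then $T_{OES}\le \Delta\, T^*$, where $\Delta=\max_{m\in\{1,\dots,M\}}\max\{\widehat{\Delta^m_{in}},\widehat{\Delta^m_{out}}\}$; i.e., OES is $\Delta$-competitive.
   Context: Setting (distributed GNN training job). There are $M$ machines; machine $m$ has available incoming bandwidth $B^m_{in}$ and outgoing bandwidth $B^m_{out}$. The set of tasks is $J=J_g\cup J_s\cup J_w\cup J_{ps}$ (graph store servers, samplers, workers, parameter servers (PSs)); each worker has an associated set of samplers. A fixed placement assigns each task $j$ to exactly one machine ($y^m_j=1$ iff $j$ is on machine $m$). Training runs for $N$ iterations in discrete time steps $t=1,\dots,T$; task $j$ takes execution time $p_j$ in every iteration; $(j,n)$ denotes task $j$ in iteration $n$. Successor relation $succ(j,n)$: $(s,n)\in succ(g,n)$ for every graph store server $g$ and sampler $s$; $(w,n)\in succ(s,n)$ for every sampler $s$ and its associated worker $w$; $(ps,n)\in succ(w,n)$ for every worker $w$ and PS $ps$; $(w,n+1)\in succ(ps,n)$ for every PS $ps$ and worker $w$. For each $(j',n')\in succ(j,n)$ with $j,j'$ on different machines there is a flow $(j,n)\to(j',n')$ of data volume $d_{(j,n)\to(j',n')}$. Offline scheduling problem. Choose start times $x^t_{j,n}\in\{0,1\}$ (each $(j,n)$ starts exactly once; graph store servers start iteration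 1 at $t=1$) and transmission amounts $k^t_{(j,n)\to(j',n')}\ge 0$ such that: each flow transmits total amount $d_{(j,n)\to(j',n')}$; a flow transmits only at times $t\ge$ (start of $(j,n)$) $+p_j$ and strictly before the start of $(j',n')$; if $j,j'$ are on the same machine, $(j',n')$ starts no earlier than the finish of $(j,n)$; $(j,n+1)$ starts no earlier than the finish of $(j,n)$; the last transmission time of $(j,n)\to(j',n')$ is strictly before the first transmission time of $(j,n+1)\to(j',n'+1)$; and at each time $t$ the total amount sent out of (into) machine $m$ over inter-machine flows is at most $B^m_{out}$ ($B^m_{in}$). The objective is to minimize the makespan $\max_{j}\{(\text{start time of }(j,N))+p_j\}$. $T^*$ is its optimal value when all data volumes are known in advance. (Online, the data volumes are not known beforehand.) Algorithm OES. It maintains a set $F_{act}$ of active flows and a set $F_{pend}$ of pending flows. At $t=1$ all graph store servers of iteration 1 start. At each time step $t$: every task $(j,n)$ whose dependencies are all satisfied starts; for every task $(j,n)$ that finished at $t-1$ and every inter-machine flow $(j,n)\to(j',n')$ out of it, the flow is added to $F_{pend}$ if $(j,n-1)\to(j',n'-1)\in F_{act}\cup F_{pend}$, and to $F_{act}$ otherwise; for every flow $(j,n)\to(j',n')$ that finished at $t-1$, if $(j,n+1)\to(j',n'+1)\in F_{pend}$ it is moved to $F_{act}$. Then, with $\Delta^m_{in}$ (resp. $\Delta^m_{out}$) the number of flows in $F_{act}$ whose destination (resp. source) task is on machine $m$, every active flow from a task on machine $m$ to a task on machine $m'$ transmits $\min\{B^{m'}_{in}/\Delta^{m'}_{in},\,B^m_{out}/\Delta^m_{out}\}$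 data units at time $t$. It stops when all tasks of iteration $N$ are done. One-iteration degrees. Let $F_{one\_iter}$ be the set of all inter-machine flows of one training iteration (including the transfers of parameters updated by the PSs in that iteration to the workers). $\widehat{\Delta^m_{in}}$ (resp. $\widehat{\Delta^m_{out}}$) is the number of flows in $F_{one\_iter}$ whose destination (resp. source) task is placed on machine $m$. *)

(* Defs.v *)
From HB Require Import structures.
From mathcomp Require Import all_boot all_order all_algebra.
Set Implicit Arguments. Unset Strict Implicit. Unset Printing Implicit Defensive.
Import Order.TTheory GRing.Theory Num.Theory.

Inductive task_kind := GraphStore | Sampler | Worker | PServer.

(* A distributed GNN training job with a fixed placement.
   Time steps and iterations are numbered from 1. *)
Record gnn_job (R : realFieldType) (J : finType) (M : nat) := GnnJob {
  kind   : J -> task_kind;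
  assoc  : J -> J -> bool;     (* assoc s w : sampler s is associated to worker w *)
  place  : J -> 'I_M;          (* y^m_j = 1 iff place j = m *)
  ptime  : J -> nat;
  niter  : nat;
  bw_in  : 'I_M -> R;
  bw_out : 'I_M -> R;
  vol    : J -> J -> nat -> R  (* vol j j' n = d_{(j,n) -> (j', n + shift j j')} *)
}.

Section GNN.
Variables (R : realFieldType) (J : finType) (M : nat) (G : gnn_job R J M).

(* (j', n + shift j j') \in succ (j, n)  iff  edge j j' *)
Definition edge (i j : J) : bool :=
  match kind G i, kind G j with
  | GraphStore, Sampler => true
  | Sampler, Worker => assoc G i j
  | Worker, PServer => true
  | PServer, Worker => true
  | _, _ => false
  end.

Definition shift (i j : J) : nat :=
  match kind G i, kind G j with
  | PServer, Worker => 1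
  | _, _ => 0
  end.

Definition is_flow (j j' : J) (n : nat) : bool :=
  [&& edge j j', place G j != place G j', 0 < n & n + shift j j' <= niter G].

(* s j n : start time of (j,n) (the unique t with x^t_{j,n} = 1);
   k j j' n t : amount k^t transmitted by flow (j,n) -> (j', n + shift j j'). *)
Definition feasible (s : J -> nat -> nat) (k : J -> J -> nat -> nat -> R) : Prop :=
  (forall j n, 0 < n <= niter G -> 0 < s j n) /\
  (forall g, kind G g = GraphStore -> s g 1 = 1) /\
  (forall j n, 0 < n -> n < niter G -> s j n + ptime G j <= s j n.+1) /\
  (forall j j' n, edge j j' -> place G j = place G j' -> 0 < n ->
      n + shift j j' <= niter G -> s j n + ptime G j <= s j' (n + shift j j')) /\
  (forall j j' n t, is_flow j j' n -> (0 <= k j j' n t)%R) /\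
  (forall j j' n t, is_flow j j' n -> k j j' n t != 0%R ->
      s j n + ptime G j <= t < s j' (n + shift j j')) /\
  (forall j j' n, is_flow j j' n ->
      (\sum_(s j n + ptime G j <= t < s j' (n + shift j j')) k j j' n t)%R
        = vol G j j' n) /\
  (forall j j' n t t', is_flow j j' n -> is_flow j j' n.+1 ->
      k j j' n t != 0%R -> k j j' n.+1 t' != 0%R -> t < t') /\
  (forall (m : 'I_M) t,
      (\sum_(j : J) \sum_(j' : J) \sum_(0 <= n < (niter G).+1
          | is_flow j j' n && (place G j == m)) k j j' n t <= bw_out G m)%R) /\
  (forall (m : 'I_M) t,
      (\sum_(j : J) \sum_(j' : J) \sum_(0 <= n < (niter G).+1
          | is_flow j j' n && (place G j' == m)) k j j' n t <= bw_in G m)%R).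

Definition makespan (s : J -> nat -> nat) : nat :=
  \max_(j : J) (s j (niter G) + ptime G j).

Definition din_hat (m : 'I_M) : nat :=
  #|[pred jj : J * J | edge jj.1 jj.2 && (place G jj.1 != place G jj.2)
                        && (place G jj.2 == m)]|.
Definition dout_hat (m : 'I_M) : nat :=
  #|[pred jj : J * J | edge jj.1 jj.2 && (place G jj.1 != place G jj.2)
                        && (place G jj.1 == m)]|.
Definition Delta : nat := \max_(m < M) maxn (din_hat m) (dout_hat m).

(* State after a time step: start times of tasks, remaining volumes of flows,
   completion times of flows, and the sets F_act and F_pend. *)
Record ostate := OState {
  o_start : J -> nat -> option nat;
  o_rem   : J -> J -> nat -> R;
  o_fin   : J -> J -> nat -> option nat;
  o_act   : J -> J -> nat -> bool;
  o_pend  : J -> J -> nat -> bool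
}.

Definition ostate0 : ostate :=
  OState (fun _ _ => None) (vol G) (fun _ _ _ => None)
         (fun _ _ _ => false) (fun _ _ _ => false).

Section Step.
Variables (S : ostate) (t : nat). (* S = state after step t-1; we compute step t *)

(* (j,n) finished at some time <= t-1 (it runs during s0, ..., s0 + p_j - 1) *)
Definition finished_by (j : J) (n : nat) : bool :=
  if o_start S j n is Some s0 then s0 + ptime G j <= t else false.
(* (j,n) finished exactly at t-1 *)
Definition finished_at (j : J) (n : nat) : bool :=
  if o_start S j n is Some s0 then s0 + ptime G j == t else false.
Definition flow_done (j j' : J) (n : nat) : bool :=
  if o_fin S j j' n is Some f then f < t else false.

Definition ready (j : J) (n : nat) : bool :=
  [&& 0 < n <= niter G, o_start S j n == None,
      (n == 1) || finished_by j n.-1 &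
      [forall i : J, (edge i j && (shift i j < n)) ==>
         (if place G i == place G j then finished_by i (n - shift i j)
          else flow_done i j (n - shift i j))]].

Definition new_start (j : J) (n : nat) : option nat :=
  if o_start S j n is Some s0 then Some s0
  else if ready j n then Some t else None.

(* flows whose source task finished at t-1 *)
Definition released (j j' : J) (n : nat) : bool :=
  is_flow j j' n && finished_at j n.
Definition prev_live (j j' : J) (n : nat) : bool :=
  (1 < n) && (o_act S j j' n.-1 || o_pend S j j' n.-1).
Definition pend1 (j j' : J) (n : nat) : bool :=
  o_pend S j j' n || (released j j' n && prev_live j j' n).
Definition act1 (j j' : J) (n : nat) : bool :=
  o_act S j j' n || (released j j' n && ~~ prev_live j j' n).
(* pending flows whose previous-iteration flow finished at t-1 become active *)
Definition moved (j j' : J) (n : nat) : bool :=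
  [&& 1 < n, o_fin S j j' n.-1 == Some t.-1 & pend1 j j' n].
Definition act2 (j j' : J) (n : nat) : bool := act1 j j' n || moved j j' n.
Definition pend2 (j j' : J) (n : nat) : bool := pend1 j j' n && ~~ moved j j' n.

Definition Din (m : 'I_M) : nat :=
  \sum_(j : J) \sum_(j' : J) \sum_(0 <= n < (niter G).+1
     | [&& is_flow j j' n, act2 j j' n & place G j' == m]) 1.
Definition Dout (m : 'I_M) : nat :=
  \sum_(j : J) \sum_(j' : J) \sum_(0 <= n < (niter G).+1
     | [&& is_flow j j' n, act2 j j' n & place G j == m]) 1.

Definition rate (j j' : J) : R :=
  (Num.min (bw_in G (place G j') / (Din (place G j'))%:R)
           (bw_out G (place G j) / (Dout (place G j))%:R))%R.

Definition sent (j j' : J) (n : nat) : R :=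
  if act2 j j' n then Num.min (rate j j') (o_rem S j j' n) else 0%R.
Definition completes (j j' : J) (n : nat) : bool :=
  act2 j j' n && (o_rem S j j' n <= rate j j')%R.

Definition oes_step : ostate :=
  OState new_start
         (fun j j' n => (o_rem S j j' n - sent j j' n)%R)
         (fun j j' n => if completes j j' n then Some t else o_fin S j j' n)
         (fun j j' n => act2 j j' n && ~~ completes j j' n)
         pend2.
End Step.

Fixpoint oes_state (t : nat) : ostate :=
  if t is t'.+1 then oes_step (oes_state t') t else ostate0.

(* T_OES <= X : by time X every task of iteration N has started at some s0
   with s0 + p_j <= X. *)
Definition OES_done_by (X : nat) : Prop :=
  forall j : J, exists2 s0, o_start (oes_state X) j (niter G) = Some s0
                          & s0 + ptime G j <= X.

End GNN.

(* Main.v *)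
Require Import Defs.
From HB Require Import structures.
From mathcomp Require Import all_boot all_order all_algebra.
From mathcomp Require Import zify ring lra.
Set Implicit Arguments. Unset Strict Implicit. Unset Printing Implicit Defensive.
Import Order.TTheory GRing.Theory Num.Theory.

Section Proof.
Variables (R : realFieldType) (J : finType) (M : nat) (G : gnn_job R J M).
Hypothesis Hp : forall j, 0 < ptime G j.

Notation st := (oes_state G).

Lemma startS t j n : o_start (st t.+1) j n = new_start G (st t) t.+1 j n.
Proof. by []. Qed.
Lemma actS t j j' n : o_act (st t.+1) j j' n =
  act2 G (st t) t.+1 j j' n && ~~ completes G (st t) t.+1 j j' n.
Proof. by []. Qed.
Lemma pendS t j j' n : o_pend (st t.+1) j j' n = pend2 G (st t) t.+1 j j' n.
Proof. by []. Qed.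
Lemma finS t j j' n : o_fin (st t.+1) j j' n =
  if completes G (st t) t.+1 j j' n then Some t.+1 else o_fin (st t) j j' n.
Proof. by []. Qed.
Lemma remS t j j' n : o_rem (st t.+1) j j' n =
  (o_rem (st t) j j' n - sent G (st t) t.+1 j j' n)%R.
Proof. by []. Qed.

Lemma start_persist t i j n x : o_start (st t) j n = Some x ->
  o_start (st (i + t)) j n = Some x.
Proof.
elim: i => [//|i IH] H; rewrite addSn startS /new_start IH //.
Qed.

Lemma start_persist' t t' j n x : t <= t' -> o_start (st t) j n = Some x ->
  o_start (st t') j n = Some x.
Proof. by move=> le H; rewrite -(subnK le); apply: start_persist. Qed.

Lemma start_origin t j n x : o_start (st t) j n = Some x ->
  [/\ 0 < x <= t, o_start (st x.-1) j n = None & ready G (st x.-1) x j n].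
Proof.
elim: t => [//|t IH]; rewrite startS /new_start.
case E: (o_start (st t) j n) => [y|].
  by move=> [Exy]; subst x; case: (IH E) => /andP[? ?] ? ?; split => //; apply/andP; split=> //; lia.
case: ifP => // Hr [Ex]; subst x; split => //; lia.
Qed.

Lemma start_le t j n x : o_start (st t) j n = Some x -> 0 < x <= t.
Proof. by case/start_origin. Qed.

Lemma fbS t j n : finished_by G (st t.+1) t.+1 j n =
  finished_by G (st t) t j n || finished_at G (st t) t.+1 j n.
Proof.
rewrite /finished_by /finished_at startS /new_start.
case: (o_start (st t) j n) => [y|].
  by rewrite leq_eqVlt ltnS orbC.
case: ifP => // _. have := Hp j. lia.
Qed.

Lemma start_prev t j n x : o_start (st t) j n = Some x -> 1 < n ->
  exists2 y, o_start (st t) j n.-1 = Some y & y + ptime G j <= x.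
Proof.
move=> H n1; case: (start_origin H) => /andP[x0 xt] _ /and4P[_ _ Hf _].
move: Hf; rewrite (gtn_eqF n1) /= /finished_by.
case E: (o_start _ j n.-1) => [y|] // Hy.
exists y => //; apply: start_persist' E; lia.
Qed.


Record Inv (t : nat) : Prop := MkInv {
  inv1 : forall j j' n, o_act (st t) j j' n || o_pend (st t) j j' n || (o_fin (st t) j j' n != None) ->
        is_flow G j j' n && finished_by G (st t) t j n;
  inv2 : forall j j' n f, o_fin (st t) j j' n = Some f ->
        [&& ~~ o_act (st t) j j' n, ~~ o_pend (st t) j j' n & f <= t];
  inv3 : forall j j' n, ~~ (o_act (st t) j j' n && o_pend (st t) j j' n);
  inv4 : forall j j' n, is_flow G j j' n -> finished_by G (st t) t j n ->
        o_act (st t) j j' n || o_pend (st t) j j' n || (o_fin (st t) j j' n != None);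
  inv5 : forall j j' n' n, o_act (st t) j j' n' || (o_fin (st t) j j' n' != None) ->
        0 < n < n' -> o_fin (st t) j j' n != None;
  inv6 : forall j j' n, ~~ o_act (st t) j j' n -> o_fin (st t) j j' n = None ->
        o_rem (st t) j j' n = vol G j j' n }.

Lemma Inv0 : Inv 0.
Proof.
split => //= j j' n; rewrite /finished_by //.
Qed.

Lemma is_flow_prev j j' n : is_flow G j j' n -> 1 < n -> is_flow G j j' n.-1.
Proof.
rewrite /is_flow => /and4P[-> -> _ H] n1 /=; apply/andP; split; lia.
Qed.

Section StepL.
Variable t : nat.
Hypothesis HI : Inv t.
Let S := st t.

Lemma rel_false j j' n : o_act S j j' n || o_pend S j j' n || (o_fin S j j' n != None) ->
  released G S t.+1 j j' n = false.
Proof.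
case: HI => I1 _ _ _ _ _ /I1 /andP[_].
rewrite /released /finished_by /finished_at.
case: (o_start S j n) => [y|]; last by rewrite andbF.
move=> H; apply/negbTE; rewrite negb_and; apply/orP; right; apply/negP => /eqP. lia.
Qed.

Lemma fin_quiet j j' n f : o_fin S j j' n = Some f ->
  act2 G S t.+1 j j' n = false /\ pend1 G S t.+1 j j' n = false.
Proof.
move=> Hf; have Hr : released G S t.+1 j j' n = false by apply: rel_false; rewrite Hf orbT.
case: HI => _ I2 _ _ _ _; case/and3P: (I2 _ _ _ _ Hf) => /negbTE Ha /negbTE Hpd _.
by rewrite /act2 /act1 /moved /pend1 Ha Hpd Hr /= !andbF.
Qed.

Lemma act2_flow j j' n : act2 G S t.+1 j j' n -> is_flow G j j' n.
Proof.
case: HI => I1 _ _ _ _ _.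
rewrite /act2 /act1 /moved /pend1 /released.
case Ha: (o_act S j j' n) => /=.
  by move=> _; have := I1 j j' n; rewrite Ha => /(_ isT) /andP[].
case/orP => [/andP[/andP[] //]|].
case/and3P=> _ _ /orP[Hpd|/andP[/andP[] //]].
by have := I1 j j' n; rewrite Hpd orbT => /(_ isT) /andP[].
Qed.

Lemma fat_prev j n : finished_at G S t.+1 j n -> 1 < n -> finished_by G S t j n.-1.
Proof.
rewrite /finished_at /finished_by.
case E: (o_start S j n) => [x|] // /eqP Hx n1.
case: (start_prev E n1) => y -> Hy; have := Hp j; lia.
Qed.

Lemma act2_prev j j' n' n : act2 G S t.+1 j j' n' -> 0 < n < n' ->
  o_fin S j j' n != None.
Proof.
case: HI => I1 I2 I3 I4 I5 I6 Hact Hn.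
have Hfl := act2_flow Hact.
have prevfin : o_fin S j j' n'.-1 != None -> o_fin S j j' n != None.
  move=> Hf; case: (ltngtP n n'.-1) => [lt|gt|->] //.
  - by apply: (I5 _ _ n'.-1); [rewrite Hf orbT|lia].
  - lia.
move: Hact; rewrite /act2 /act1 /moved.
case Ha: (o_act S j j' n') => /=.
  by move=> _; apply: (I5 _ _ n'); rewrite ?Ha.
case/orP => [/andP[Hrel]|/and3P[_ /eqP Hf _]]; last by apply: prevfin; rewrite Hf.
rewrite /prev_live (_ : 1 < n' = true) /=; last by apply/idP; lia.
rewrite negb_or => /andP[Hna Hnp].
apply: prevfin.
move: Hrel; rewrite /released => /andP[Hfl' Hfa].
have := I4 j j' n'.-1 (is_flow_prev Hfl' (ltac:(lia))) (fat_prev Hfa (ltac:(lia))).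
by rewrite (negbTE Hna) (negbTE Hnp).
Qed.


Lemma act2_uniq j j' n n' : act2 G S t.+1 j j' n -> act2 G S t.+1 j j' n' -> n = n'.
Proof.
wlog lt : n n' / n < n'.
  move=> W H1 H2; case: (ltngtP n n') => [l|l|//].
  - exact: W.
  - by apply/esym; apply: W.
move=> H1 H2.
have := act2_flow H1; rewrite /is_flow => /and4P[_ _ n0 _].
have := act2_prev H2 (ltac:(apply/andP; split; [exact n0|exact lt])).
case E: (o_fin S j j' n) => [f|] // _.
by case: (fin_quiet E); rewrite H1.
Qed.

Lemma act1_pend1 j j' n : act1 G S t.+1 j j' n -> pend1 G S t.+1 j j' n -> False.
Proof.
rewrite /act1 /pend1.
case Ha: (o_act S j j' n) => /=.
  move=> _; have := inv3 HI j j' n; rewrite Ha /= => /negbTE ->.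
  by rewrite (rel_false (j:=j) (j':=j') (n:=n)) ?Ha.
case/andP=> Hr Hpl; case Hpd: (o_pend S j j' n) => /=.
  by rewrite (rel_false (j:=j) (j':=j') (n:=n)) ?Hpd ?orbT in Hr.
by rewrite (negbTE Hpl) andbF.
Qed.

End StepL.

Lemma Inv_step t : Inv t -> Inv t.+1.
Proof.
move=> HI; set S := st t.
have keep_f : forall j j' n, o_fin S j j' n != None -> o_fin (st t.+1) j j' n != None.
  by move=> j j' n; rewrite finS; case: ifP.
have cmp_act : forall j j' n, completes G S t.+1 j j' n -> act2 G S t.+1 j j' n.
  by move=> j j' n /andP[].
have keep_a : forall j j' n, act2 G S t.+1 j j' n ->
    o_act (st t.+1) j j' n || (o_fin (st t.+1) j j' n != None).
  by move=> j j' n H; rewrite actS finS H /=; case: ifP.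
have keep_p : forall j j' n, pend1 G S t.+1 j j' n ->
    o_pend (st t.+1) j j' n || act2 G S t.+1 j j' n.
  by move=> j j' n H; rewrite pendS /pend2 H /act2; case: (moved _ _ _ _ _ _) => //=; rewrite orbT.
have src : forall j j' n, act2 G S t.+1 j j' n || pend1 G S t.+1 j j' n ->
    (o_act S j j' n || o_pend S j j' n || (o_fin S j j' n != None)) || released G S t.+1 j j' n.
  move=> j j' n; rewrite /act2 /act1 /moved /pend1.
  case: (o_act S j j' n) => //=; case: (o_pend S j j' n) => //=.
  case: (released _ _ _ _ _ _) => //=; rewrite ?orbT ?andbF //.
have pend_free : forall j j' n, o_pend (st t.+1) j j' n -> pend1 G S t.+1 j j' n.
  by move=> j j' n; rewrite pendS => /andP[].
split.
- move=> j j' n H.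
  have H' : act2 G S t.+1 j j' n || pend1 G S t.+1 j j' n || (o_fin S j j' n != None).
    move: H; rewrite actS pendS /pend2 finS.
    case Hc: (completes _ _ _ _ _ _) => /=; first by rewrite cmp_act.
    by case: (act2 _ _ _ _ _ _) => //=; case: (pend1 _ _ _ _ _ _).
  rewrite fbS.
  case/orP: H' => [/src/orP[H1|H1]|H1].
  + by case/andP: (inv1 HI H1) => -> ->.
  + by move: H1; rewrite /released => /andP[-> ->]; rewrite orbT.
  + by have := inv1 HI (j:=j) (j':=j') (n:=n); rewrite H1 orbT => /(_ isT) /andP[-> ->].
- move=> j j' n f; rewrite finS.
  case Hc: (completes _ _ _ _ _ _).
    move=> [<-]; rewrite actS pendS /pend2 Hc andbF /= leqnn andbT.
    have := cmp_act _ _ _ Hc; rewrite /act2.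
    case Hm: (moved _ _ _ _ _ _); first by rewrite andbF.
    rewrite orbF andbT => Ha1; apply/negP => Hp1; exact: (act1_pend1 HI Ha1 Hp1).
  move=> Hf; case: (fin_quiet HI Hf) => Ha Hp1.
  rewrite actS pendS /pend2 Ha Hp1 /=.
  by case/and3P: (inv2 HI Hf) => _ _ ?; apply: leqW.
- move=> j j' n; rewrite actS pendS /pend2.
  case Hm: (moved _ _ _ _ _ _); first by rewrite !andbF.
  rewrite /act2 Hm orbF; apply/negP => /andP[/andP[Ha1 _] /andP[Hp1 _]].
  exact: (act1_pend1 HI Ha1 Hp1).
- move=> j j' n Hfl; rewrite fbS => /orP[Hfb|Hfa].
  + case/orP: (inv4 HI Hfl Hfb) => [/orP[Ha|Hpd]|Hf].
    * have := keep_a j j' n; rewrite /act2 /act1 Ha /= => /(_ isT).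
      by case/orP => ->; rewrite ?orbT.
    * have Hp1 : pend1 G S t.+1 j j' n by rewrite /pend1 Hpd.
      case/orP: (keep_p _ _ _ Hp1) => [->|/keep_a/orP[]->]; by rewrite ?orbT.
    * by rewrite keep_f ?orbT.
  + have Hrel : released G S t.+1 j j' n by rewrite /released Hfl Hfa.
    case Hpl: (prev_live S j j' n).
    * have Hp1 : pend1 G S t.+1 j j' n by rewrite /pend1 Hrel Hpl orbT.
      case/orP: (keep_p _ _ _ Hp1) => [->|/keep_a/orP[]->]; by rewrite ?orbT.
    * have Ha2 : act2 G S t.+1 j j' n by rewrite /act2 /act1 Hrel Hpl orbT.
      by case/orP: (keep_a _ _ _ Ha2) => ->; rewrite ?orbT.
- move=> j j' n' n H Hn.
  apply: keep_f.
  move: H; rewrite actS finS.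
  case Hc: (completes _ _ _ _ _ _) => /=.
    by move=> _; apply: (act2_prev HI (cmp_act _ _ _ Hc) Hn).
  rewrite andbT => /orP[Ha|Hf].
    exact: (act2_prev HI Ha Hn).
  by apply: (inv5 HI (n' := n')); rewrite ?Hf ?orbT.
- move=> j j' n; rewrite actS finS remS.
  case Hc: (completes _ _ _ _ _ _) => //= Ha Hf.
  rewrite andbT in Ha.
  have Hoa : ~~ o_act S j j' n.
    by apply: contra Ha; rewrite /act2 /act1 => ->.
  by rewrite /sent (negbTE Ha) subr0 (inv6 HI Hoa Hf).
Qed.

Lemma Inv_all t : Inv t.
Proof. elim: t => [|t IH]; [exact: Inv0 | exact: Inv_step]. Qed.


Lemma fin_persist t i j j' n f : o_fin (st t) j j' n = Some f ->
  o_fin (st (i + t)) j j' n = Some f.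
Proof.
elim: i => [//|i IH] H; rewrite addSn finS.
have := IH H => H'.
case: (fin_quiet (Inv_all (i + t)) H') => Ha _.
by rewrite /completes Ha.
Qed.

Lemma fin_persist' t t' j j' n f : t <= t' -> o_fin (st t) j j' n = Some f ->
  o_fin (st t') j j' n = Some f.
Proof. by move=> le H; rewrite -(subnK le); apply: fin_persist. Qed.

Lemma fin_le t j j' n f : o_fin (st t) j j' n = Some f -> f <= t.
Proof. by move=> H; case/and3P: (inv2 (Inv_all t) H). Qed.

Lemma fin_none_before t t' j j' n f : o_fin (st t) j j' n = Some f -> t' < f ->
  o_fin (st t') j j' n = None.
Proof.
move=> H lt; case E: (o_fin (st t') j j' n) => [f'|] //.
have le' := fin_le E.
have tt : t' <= t by have := fin_le H; lia.
by move: (fin_persist' tt E); rewrite H => -[ef]; lia.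
Qed.

Lemma sum_uniq1 (P : pred nat) a b : (forall x y, P x -> P y -> x = y) ->
  \sum_(a <= n < b | P n) 1 <= 1.
Proof.
move=> HP; elim: b => [|b IH]; first by rewrite big_geq.
case: (leqP a b) => ab; last by rewrite big_geq.
rewrite big_mkcond big_nat_recr //= -big_mkcond /=.
case Pb: (P b); last by rewrite addn0.
rewrite big1_seq ?add0n // => n /andP[Pn]; rewrite mem_index_iota => /andP[_ nb].
by have := HP _ _ Pn Pb; lia.
Qed.

Definition Delta_ge m : maxn (din_hat G m) (dout_hat G m) <= Delta G.
Proof. by rewrite /Delta; apply: (leq_bigmax m). Qed.

Lemma Din_le t m : Din G (st t) t.+1 m <= Delta G.
Proof.
apply: leq_trans (leq_trans (leq_maxl _ _) (Delta_ge m)).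
rewrite /Din /din_hat.
apply: (@leq_trans (\sum_j \sum_j' ((edge G j j' && (place G j != place G j'))
                                     && (place G j' == m) : nat))).
  apply: leq_sum => j _; apply: leq_sum => j' _.
  case C: ((edge G j j' && (place G j != place G j')) && (place G j' == m)).
    apply: sum_uniq1 => x y /and3P[_ Hx _] /and3P[_ Hy _].
    exact: (act2_uniq (Inv_all t) Hx Hy).
  rewrite big_pred0 // => n; apply/negbTE; apply: contraFN C.
  by case/and3P; rewrite /is_flow => /and4P[-> -> _ _] _ ->.
apply: eq_leq; rewrite pair_bigA /= -sum1_card [RHS]big_mkcond /=; apply: eq_bigr.
by move=> [a b] _; rewrite inE /=; case: ifP.
Qed.

Lemma Dout_le t m : Dout G (st t) t.+1 m <= Delta G.
Proof.
apply: leq_trans (leq_trans (leq_maxr _ _) (Delta_ge m)).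
rewrite /Dout /dout_hat.
apply: (@leq_trans (\sum_j \sum_j' ((edge G j j' && (place G j != place G j'))
                                     && (place G j == m) : nat))).
  apply: leq_sum => j _; apply: leq_sum => j' _.
  case C: ((edge G j j' && (place G j != place G j')) && (place G j == m)).
    apply: sum_uniq1 => x y /and3P[_ Hx _] /and3P[_ Hy _].
    exact: (act2_uniq (Inv_all t) Hx Hy).
  rewrite big_pred0 // => n; apply/negbTE; apply: contraFN C.
  by case/and3P; rewrite /is_flow => /and4P[-> -> _ _] _ ->.
apply: eq_leq; rewrite pair_bigA /= -sum1_card [RHS]big_mkcond /=; apply: eq_bigr.
by move=> [a b] _; rewrite inE /=; case: ifP.
Qed.

Lemma Din_pos t j j' n : act2 G (st t) t.+1 j j' n -> is_flow G j j' n ->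
  0 < Din G (st t) t.+1 (place G j').
Proof.
move=> Ha Hf; rewrite /Din (bigD1 j) //= (bigD1 j') //=.
apply: leq_trans (leq_addr _ _); apply: leq_trans (leq_addr _ _).
rewrite lt0n sum_nat_seq_neq0; apply/hasP; exists n.
  by rewrite mem_index_iota; move: Hf; rewrite /is_flow => /and4P[_ _ _]; lia.
by rewrite Hf Ha eqxx.
Qed.

Lemma Dout_pos t j j' n : act2 G (st t) t.+1 j j' n -> is_flow G j j' n ->
  0 < Dout G (st t) t.+1 (place G j).
Proof.
move=> Ha Hf; rewrite /Dout (bigD1 j) //= (bigD1 j') //=.
apply: leq_trans (leq_addr _ _); apply: leq_trans (leq_addr _ _).
rewrite lt0n sum_nat_seq_neq0; apply/hasP; exists n.
  by rewrite mem_index_iota; move: Hf; rewrite /is_flow => /and4P[_ _ _]; lia.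
by rewrite Hf Ha eqxx.
Qed.

Hypothesis Hbin : forall m, (0 < bw_in G m)%R.
Hypothesis Hbout : forall m, (0 < bw_out G m)%R.
Hypothesis HD : 0 < Delta G.

Definition cap j j' : R := Num.min (bw_in G (place G j')) (bw_out G (place G j)).
Definition rlb j j' : R := (cap j j' / (Delta G)%:R)%R.

Lemma cap_pos j j' : (0 < cap j j')%R.
Proof. by rewrite /cap lt_min Hbin Hbout. Qed.

Lemma div_mono (a : R) (x y : nat) : (0 <= a)%R -> 0 < x -> x <= y ->
  (a / y%:R <= a / x%:R)%R.
Proof.
move=> a0 x0 xy; apply: ler_wpM2l => //.
rewrite lef_pV2 ?ler_nat // posrE ltr0n //; lia.
Qed.

Lemma rate_lb t j j' n : act2 G (st t) t.+1 j j' n ->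
  (rlb j j' <= rate G (st t) t.+1 j j')%R.
Proof.
move=> Ha; have Hf := act2_flow (Inv_all t) Ha.
rewrite /rate /rlb /cap le_min; apply/andP; split.
- apply: le_trans (div_mono (ltW (Hbin _)) (Din_pos Ha Hf) (Din_le _ _)).
  by apply: ler_wpM2r; [rewrite invr_ge0 ler0n | rewrite ge_min lexx].
- apply: le_trans (div_mono (ltW (Hbout _)) (Dout_pos Ha Hf) (Dout_le _ _)).
  by apply: ler_wpM2r; [rewrite invr_ge0 ler0n | rewrite ge_min lexx orbT].
Qed.


Lemma activate i a j j' n : act2 G (st a) a.+1 j j' n ->
  (o_rem (st a) j j' n <= (i.+1)%:R * rlb j j')%R ->
  exists f, o_fin (st (i + a.+1)) j j' n = Some f.
Proof.
elim: i a => [|i IH] a Ha Hr.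
  have Hc : completes G (st a) a.+1 j j' n.
    rewrite /completes Ha /=; apply: le_trans (rate_lb Ha).
    by rewrite mul1r in Hr.
  by exists a.+1; rewrite add0n finS Hc.
case Hc: (completes G (st a) a.+1 j j' n).
  by exists a.+1; apply: fin_persist; rewrite finS Hc.
have Hlt : (rate G (st a) a.+1 j j' < o_rem (st a) j j' n)%R.
  by move: Hc; rewrite /completes Ha /= => /negbT; rewrite -ltNge.
have Ha' : act2 G (st a.+1) a.+2 j j' n.
  by rewrite /act2 /act1 actS Ha Hc.
rewrite addSnnS; apply: (IH a.+1 Ha').
rewrite remS /sent Ha min_l; last exact: ltW Hlt.
have := rate_lb Ha; move: Hr.
set r := rlb j j'; set q := rate _ _ _ _ _; set x := o_rem _ _ _ _.
rewrite -[i.+2]addn1 natrD mulrDl mul1r => H1 H2.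
lra.
Qed.


Lemma fin_origin t j j' n f : o_fin (st t) j j' n = Some f -> o_fin (st f) j j' n = Some f.
Proof.
elim: t => [//|t IH]; rewrite finS; case: ifP => Hc; first by move=> [<-]; rewrite finS Hc.
exact: IH.
Qed.

Lemma fin_between t t' j j' n f : o_fin (st t) j j' n = Some f -> f <= t' ->
  o_fin (st t') j j' n = Some f.
Proof. by move=> H le; apply: (fin_persist' le); apply: fin_origin H. Qed.

Lemma sum_window (f : nat -> R) (c : R) phi X :
  (0 <= c)%R -> (forall t, 0 <= f t)%R -> (forall t, f t <= c)%R ->
  (forall t, f t != 0%R -> phi <= t < X) ->
  forall a b, (\sum_(a <= t < b) f t <= ((minn b X) - phi)%:R * c)%R.
Proof.
move=> c0 f0 fc fnz a; elim=> [|b IH]; first by rewrite big_geq // mulr_ge0.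
case: (leqP a b) => ab; last by rewrite big_geq // mulr_ge0.
rewrite big_nat_recr //=.
case R1: (phi <= b < X).
  have -> : (minn b.+1 X - phi = (minn b X - phi) + 1)%N by move: R1; lia.
  by rewrite natrD mulrDl mul1r lerD.
have -> : (minn b.+1 X - phi = (minn b X - phi))%N by move: R1; lia.
have -> : f b = 0%R by apply/eqP; apply: contraFT R1 => /fnz.
by rewrite addr0.
Qed.

Lemma le_sum_fin (F : J -> R) x : (forall i, 0 <= F i)%R -> (F x <= \sum_i F i)%R.
Proof. by move=> H; rewrite (bigD1 x) //= lerDl sumr_ge0. Qed.

Lemma le_sum_nat (P : pred nat) (F : nat -> R) x K : P x -> x < K ->
  (forall i, P i -> 0 <= F i)%R -> (F x <= \sum_(0 <= i < K | P i) F i)%R.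
Proof.
move=> Px xK H; rewrite big_mkcond (bigD1_seq x) ?mem_index_iota ?iota_uniq //=.
rewrite Px lerDl sumr_ge0 // => i _; case: ifP => // /H //.
Qed.

Hypothesis Hvol : forall j j' n, is_flow G j j' n -> (0 < vol G j j' n)%R.
Variables (s : J -> nat -> nat) (k : J -> J -> nat -> nat -> R).
Hypothesis Hfeas : feasible G s k.

Lemma k_ge0 j j' n t : is_flow G j j' n -> (0 <= k j j' n t)%R.
Proof. by have [_ [_ [_ [_ [f5 _]]]]] := Hfeas; apply: f5. Qed.

Lemma le_sum3 (P : J -> J -> nat -> bool) (F : J -> J -> nat -> R) j j' n K :
  P j j' n -> n < K -> (forall a b i, P a b i -> 0 <= F a b i)%R ->
  (F j j' n <= \sum_a \sum_b \sum_(0 <= i < K | P a b i) F a b i)%R.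
Proof.
move=> Pn nK H.
apply: (le_trans _ (le_sum_fin (F := fun a => (\sum_b \sum_(0 <= i < K | P a b i) F a b i)%R) j _)).
  rewrite /=; apply: (le_trans _ (le_sum_fin (F := fun b => (\sum_(0 <= i < K | P j b i) F j b i)%R) j' _)).
    rewrite /=; apply: (le_sum_nat (P := P j j') (F := F j j')) => // i; exact: H.
  by move=> b; apply: sumr_ge0 => i /H.
by move=> a; apply: sumr_ge0 => b _; apply: sumr_ge0 => i /H.
Qed.

Lemma k_le_cap j j' n t : is_flow G j j' n -> (k j j' n t <= cap j j')%R.
Proof.
have [_ [_ [_ [_ [f5 [_ [_ [_ [f9 f10]]]]]]]]] := Hfeas.
move=> Hf; have nN : n < (niter G).+1 by move: Hf; rewrite /is_flow => /and4P[_ _ _]; lia.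
rewrite /cap le_min; apply/andP; split.
- apply: (le_trans _ (f10 (place G j') t)).
  apply: (le_sum3 (P := fun a b i => is_flow G a b i && (place G b == place G j'))
                  (F := fun a b i => k a b i t)) => //; first by rewrite Hf eqxx.
  by move=> a b i /andP[/f5 ->].
- apply: (le_trans _ (f9 (place G j) t)).
  apply: (le_sum3 (P := fun a b i => is_flow G a b i && (place G a == place G j))
                  (F := fun a b i => k a b i t)) => //; first by rewrite Hf eqxx.
  by move=> a b i /andP[/f5 ->].
Qed.

Definition FlowOK X := forall j j' n, is_flow G j j' n ->
  (forall t, k j j' n t != 0%R -> t < X) ->
  exists f, o_fin (st (Delta G * X).-1) j j' n = Some f.
Definition TaskOK X := forall j n, 0 < n <= niter G -> s j n = X ->
  exists sg, o_start (st (Delta G * X)) j n = Some sg.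


Lemma start_at t j n x : o_start (st t) j n = Some x -> o_start (st x) j n = Some x.
Proof.
case/start_origin=> /andP[x0 _] HN Hr.
by rewrite -(prednK x0) startS /new_start HN (prednK x0) Hr.
Qed.

Lemma flow_step X : (forall Y, Y < X -> FlowOK Y /\ TaskOK Y) -> FlowOK X.
Proof.
have [f1 [f2 [f3 [f4 [f5 [f6 [f7 [f8 [f9 f10]]]]]]]]] := Hfeas.
move=> IH j j' n Hf HX.
set D := Delta G.
have Hex : exists t, k j j' n t != 0%R.
  have := f7 j j' n Hf.
  case Hh: (has (fun t => k j j' n t != 0%R) (index_iota (s j n + ptime G j) (s j' (n + shift G j j')))).
    by case/hasP: Hh => t _ ?; exists t.
  move=> Hs; have := Hvol Hf; rewrite -Hs big1_seq ?ltxx // => t /andP[_ Ht].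
  by apply/eqP; apply: contraFT Hh => Hnz; apply/hasP; exists t.
case: (ex_minnP Hex) => phi Hphi Hmin.
have phiX : phi < X := HX _ Hphi.
have Hwin := f6 j j' n phi Hf Hphi.
have Hvb : (vol G j j' n <= (X - phi)%:R * cap j j')%R.
  rewrite -(f7 j j' n Hf).
  apply: (le_trans (sum_window (f:=k j j' n) (c:=cap j j') (phi:=phi) (X:=X) _ _ _ _ _ _)).
  - exact: ltW (cap_pos _ _).
  - by move=> t; apply: k_ge0.
  - by move=> t; apply: k_le_cap.
  - by move=> t Hnz; rewrite (Hmin t Hnz) (HX t Hnz).
  - by rewrite ler_pM2r ?cap_pos // ler_nat; lia.
have Hn : 0 < n <= niter G by move: Hf; rewrite /is_flow => /and4P[_ _ ? ?]; lia.
have sjX : s j n < X by move: Hwin; have := Hp j; lia.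
case: (proj2 (IH _ sjX) j n Hn erefl) => sg Hsg.
case/andP: (start_le Hsg) => sg0 sgle.
have D0 : 0 < D := HD.
have ED : sg + ptime G j <= D * phi.
  have h1 : D * (s j n + ptime G j) <= D * phi by rewrite leq_mul2l; apply/orP; right; case/andP: Hwin.
  have h2 : ptime G j <= D * ptime G j by rewrite leq_pmull.
  rewrite mulnDr in h1; lia.
have phi0 : 0 < phi by move: Hwin; have := Hp j; lia.
have Dphi0 : 0 < D * phi by rewrite muln_gt0 D0.
have Hact : exists2 a, act2 G (st a) a.+1 j j' n &
    (a.+1 <= D * phi) /\ o_rem (st a) j j' n = vol G j j' n.
  set E := sg + ptime G j.
  have E0 : 0 < E by have := Hp j; lia.
  have EE : E.-1.+1 = E := prednK E0.
  have HsE : o_start (st E.-1) j n = Some sg.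
    apply: (start_persist' _ (start_at Hsg)); have := Hp j; lia.
  have Hrel : released G (st E.-1) E.-1.+1 j j' n by rewrite /released Hf /finished_at HsE EE eqxx.
  have Hq : forall b, o_act (st E.-1) j j' n || o_pend (st E.-1) j j' n || (o_fin (st E.-1) j j' n != None) = b -> b = false.
    move=> b <-; apply/negP => /(inv1 (Inv_all _)) /andP[_].
    rewrite /finished_by HsE; have := Hp j; rewrite /E; lia.
  have Hq' := Hq _ erefl.
  move/negbT: Hq'; rewrite !negb_or => /andP[/andP[/negbTE Ha0 /negbTE Hp0] /negPn/eqP Hf0].
  case Hpl: (prev_live (st E.-1) j j' n); last first.
    exists E.-1; first by rewrite /act2 /act1 Hrel Hpl /= orbT.
    split; first by rewrite EE.
    by apply: (inv6 (Inv_all _)); rewrite ?Ha0.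
  have n1 : 1 < n by move: Hpl; rewrite /prev_live => /andP[].
  have Hfp : is_flow G j j' n.-1 := is_flow_prev Hf n1.
  have Hpx : forall t, k j j' n.-1 t != 0%R -> t < phi.
    move=> t Ht; apply: (f8 j j' n.-1 t phi Hfp); rewrite ?prednK //; lia.
  case: (proj1 (IH _ phiX) j j' n.-1 Hfp Hpx) => fp Hfpf.
  have fple : fp <= (D * phi).-1 := fin_le Hfpf.
  have fpE : E.-1 < fp.
    rewrite ltnNge; apply/negP => le.
    have := inv2 (Inv_all E.-1) (fin_between Hfpf le).
    by move: Hpl; rewrite /prev_live n1 /= => /orP[] ->; rewrite ?andbF.
  have Hpend : forall i, E + i <= fp -> o_pend (st (E + i)) j j' n.
    elim => [|i IHi] Hi.
      rewrite addn0 -EE pendS /pend2 /pend1 Hrel Hpl orbT /=.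
      by rewrite /moved (fin_none_before Hfpf fpE) andbF.
    rewrite addnS pendS /pend2 /pend1 IHi /=; last by lia.
    by rewrite /moved (fin_none_before Hfpf (_ : E + i < fp)) ?andbF //; lia.
  have Hpf : o_pend (st fp) j j' n.
    by have := Hpend (fp - E); rewrite subnKC //; lia.
  exists fp.
    by rewrite /act2 /moved n1 (fin_origin Hfpf) eqxx /pend1 Hpf /= orbT.
  split; first by lia.
  apply: (inv6 (Inv_all _)).
    by have := inv3 (Inv_all fp) j j' n; rewrite Hpf andbT.
  case Ef: (o_fin (st fp) j j' n) => [g|] //.
  by have := inv2 (Inv_all fp) Ef; rewrite Hpf andbF.
case: Hact => a Ha [aD Hra].
have XP : 0 < X - phi by lia.
have DX0 : 0 < D * (X - phi) by rewrite muln_gt0 D0.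
have := activate (i := (D * (X - phi)).-1) Ha.
rewrite prednK // Hra => /(_ _) [].
  have -> : ((D * (X - phi))%:R * rlb j j' = (X - phi)%:R * cap j j')%R.
    rewrite /rlb natrM; field.
    by rewrite pnatr_eq0 -lt0n.
  exact: Hvb.
move=> f Hfin; exists f.
apply: (fin_persist' _ Hfin).
have : D * (X - phi) + D * phi = D * X by rewrite -mulnDr subnK // ltnW.
lia.
Qed.

Lemma task_step X : (forall Y, Y < X -> TaskOK Y) -> FlowOK X -> TaskOK X.
Proof.
have [f1 [f2 [f3 [f4 [f5 [f6 [f7 [f8 [f9 f10]]]]]]]]] := Hfeas.
move=> IH HF j' n' Hn sX.
set D := Delta G.
have D0 : 0 < D := HD.
have X0 : 0 < X by rewrite -sX; apply: f1.
set T := D * X.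
have T0 : 0 < T by rewrite muln_gt0 D0.
have TT : T.-1.+1 = T := prednK T0.
have dep : forall i m, 0 < m <= niter G -> s i m + ptime G i <= X ->
    finished_by G (st T.-1) T i m.
  move=> i m Hm Hle.
  have sm : s i m < X by have := Hp i; lia.
  case: (IH _ sm i m Hm erefl) => sg Hsg.
  case/andP: (start_le Hsg) => _ sgle.
  have h1 : D * (s i m + ptime G i) <= D * X by rewrite leq_mul2l Hle orbT.
  have h2 : ptime G i <= D * ptime G i by rewrite leq_pmull.
  rewrite mulnDr in h1.
  have h3 : D * s i m <= T.-1 by have := Hp i; rewrite /T; lia.
  rewrite /finished_by (start_persist' h3 Hsg); rewrite /T; lia.
case Es: (o_start (st T.-1) j' n') => [x|].
  by exists x; rewrite -TT; apply: (start_persist' (leqnSn _) Es).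
exists T; rewrite -{1}TT startS /new_start Es TT.
have Hr : ready G (st T.-1) T j' n'.
  rewrite /ready Hn Es eqxx /=; apply/andP; split.
    case: (ltnP 1 n') => n1; last by apply/orP; left; apply/eqP; lia.
    apply/orP; right; apply: dep; first by lia.
    have := f3 j' n'.-1 (ltac:(lia)) (ltac:(lia)); rewrite prednK ?sX //; lia.
  apply/forallP => i; apply/implyP => /andP[He Hsh].
  have Hm : 0 < n' - shift G i j' <= niter G by lia.
  have Hmn : n' - shift G i j' + shift G i j' = n' by rewrite subnK // ltnW.
  case: ifP => Hpl.
    apply: dep => //.
    have := f4 i j' (n' - shift G i j') He (eqP Hpl) (ltac:(lia)) (ltac:(lia)).
    by rewrite Hmn sX.
  have Hfl : is_flow G i j' (n' - shift G i j').
    by rewrite /is_flow He Hpl Hmn /=; apply/andP; split; lia.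
  case: (HF i j' _ Hfl) => [t Ht|f Hfin].
    by have := f6 i j' _ t Hfl Ht; rewrite Hmn sX; lia.
  rewrite /flow_done Hfin; have := fin_le Hfin; lia.
by rewrite Hr.
Qed.

Lemma all_ok X : FlowOK X /\ TaskOK X.
Proof.
elim/ltn_ind: X => X IH.
have HF := flow_step IH.
split => //; apply: task_step HF => Y /IH [] _ H; exact: H.
Qed.

Lemma final : 0 < niter G -> OES_done_by G (Delta G * makespan G s).
Proof.
move=> N0 j.
have Hn : 0 < niter G <= niter G by rewrite N0 leqnn.
case: (proj2 (all_ok (s j (niter G))) j (niter G) Hn erefl) => sg Hsg.
have sm : s j (niter G) + ptime G j <= makespan G s.
  by rewrite /makespan; apply: (leq_bigmax j).
case/andP: (start_le Hsg) => _ sgle.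
have h1 : Delta G * (s j (niter G) + ptime G j) <= Delta G * makespan G s by rewrite leq_mul2l sm orbT.
have h2 : ptime G j <= Delta G * ptime G j by rewrite leq_pmull.
rewrite mulnDr in h1.
exists sg; last by lia.
apply: (start_persist' _ Hsg); lia.
Qed.

End Proof.

Unset Implicit Arguments.
Set Strict Implicit.

Theorem theorem1 (R : realFieldType) (J : finType) (M : nat)
  (G : gnn_job R J M) :
  0 < niter G ->
  (forall j, 0 < ptime G j) ->
  (forall m, 0 < bw_in G m)%R ->
  (forall m, 0 < bw_out G m)%R ->
  (forall j j' n, is_flow G j j' n -> 0 < vol G j j' n)%R ->
  0 < Delta G ->
  forall (s : J -> nat -> nat) (k : J -> J -> nat -> nat -> R),
    feasible G s k -> OES_done_by G (Delta G * makespan G s).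
Proof.
move=> N0 Hp Hbin Hbout Hvol HD s k Hf.
exact: (final Hp Hbin Hbout HD Hvol Hf N0).
Qed.
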